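(* Let $f(x)$ be a real polynomial of degree $K > 1$ with positive leading coefficient, such that all roots of $f'(x)$ are real. Let $k$ be the number of distinct roots of $f'(x)$ that are not inflection points of $f(x)$, and if $k > 0$ sort them as $\alpha_k < \cdots < \alpha_1$; set $\alpha_0 = +\infty$, $f(\alpha_0) = 1$, $\alpha_{k+1} = -\infty$, $f(\alpha_{k+1}) = (-1)^K$. Then: (I) if $k > 0$, then for $i = 1,\ldots,k$, $\alpha_i$ is a local minimum of $f$ if $i$ is odd and a local maximum of $f$ if $i$ is even; (II) $k$ and $K$ have opposite parity; (III) for each $i = 1,\ldots,k+1$, $f$ is monotone on $(\alpha_i,\alpha_{i-1})$; (IV) for $i = 1,\ldots,k+1$: if $f(\alpha_i)f(\alpha_{i-1}) \geq 0$ then $f$ has no root in $(\alpha_i,\alpha_{i-1})$; if $f(\alpha_i)f(\alpha_{i-1}) < 0$ then $f$ has a unique root in $(\alpha_i,\alpha_{i-1})$, which is either simple or an inflection point of $f$; (V) if every root $\beta$ of $f'$ with $\mathrm{ord}_\beta(f'(x)) > 1$ is also a root of $f$, then for each $i = 1,\ldots,k+1$ with $f(\alpha_i)f(\alpha_{i-1}) \geq 0$, $f'$ has no root in $(\alpha_i,\alpha_{i-1})$; (VI) $f$ has only real roots if and only if $S(-\infty,+\infty) = 1$, where for $x_1 < x_2$ in $\mathbb{R}\cup\{\pm\infty\}$, $S(x_1,x_2) = \sum_{r \in [x_1,x_2)\cap\mathbb{R}} \left(\mathrm{ord}_r(f(x)) - \mathrm{ord}_r(f'(x))\right)$.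
   Context: $\mathrm{ord}_\gamma(f(x))$ denotes the order of vanishing of $f$ at $\gamma$ (zero if $\gamma$ is not a root); only finitely many terms in $S(x_1,x_2)$ are nonzero. *)

(* Defs.v *)
From HB Require Import structures.
From mathcomp Require Import all_boot all_order all_algebra.
From mathcomp Require Import reals.
From mathcomp Require Import complex.
Set Implicit Arguments. Unset Strict Implicit. Unset Printing Implicit Defensive.
Import Order.TTheory GRing.Theory Num.Theory.
Local Open Scope ring_scope.
Local Open Scope complex_scope.

Definition real_rooted (R : realType) (p : {poly R}) : Prop :=
  forall z : R[i], root (map_poly (fun x : R => x%:C) p) z -> Im z = 0.

Local Close Scope complex_scope.

Definition inflection (R : realType) (f : {poly R}) (x : R) : Prop :=
  exists2 e : R, 0 < e &
    ((forall y, x - e < y < x -> (f^`(2)).[y] < 0) /\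
     (forall y, x < y < x + e -> 0 < (f^`(2)).[y]))
 \/ ((forall y, x - e < y < x -> 0 < (f^`(2)).[y]) /\
     (forall y, x < y < x + e -> (f^`(2)).[y] < 0)).

Definition local_min (R : realType) (f : {poly R}) (a : R) : Prop :=
  exists2 e : R, 0 < e & forall y, `|y - a| < e -> f.[a] <= f.[y].

Definition local_max (R : realType) (f : {poly R}) (a : R) : Prop :=
  exists2 e : R, 0 < e & forall y, `|y - a| < e -> f.[y] <= f.[a].

(* With s = [:: alpha_1; ...; alpha_k] (so alpha_i = s`_(i.-1)), alpha_0 = +oo
   and alpha_(k+1) = -oo:  seg s i x  <=>  x \in (alpha_i, alpha_(i-1)). *)
Definition seg (R : realType) (s : seq R) (i : nat) (x : R) : bool :=
  ((size s < i)%N || (s`_i.-1 < x)) && ((i <= 1)%N || (x < s`_i.-2)).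

(* f(alpha_i), with the conventions f(alpha_0) = 1, f(alpha_(k+1)) = (-1)^K. *)
Definition fval (R : realType) (f : {poly R}) (s : seq R) (i : nat) : R :=
  if i == 0%N then 1
  else if (size s < i)%N then (-1) ^+ (size f).-1
  else f.[s`_i.-1].

Definition monotone_on (R : realType) (f : {poly R}) (P : R -> bool) : Prop :=
  (forall x y, P x -> P y -> x <= y -> f.[x] <= f.[y]) \/
  (forall x y, P x -> P y -> x <= y -> f.[y] <= f.[x]).

(* Main.v *)
Require Import Defs.
From HB Require Import structures.
From mathcomp Require Import all_boot all_order all_algebra.
From mathcomp Require Import reals.
From mathcomp Require Import complex.
From mathcomp Require Import polyrcf.
From mathcomp Require Import ring lra zify.
Import Order.TTheory GRing.Theory Num.Theory.
Local Open Scope ring_scope.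
Set Implicit Arguments. Unset Strict Implicit. Unset Printing Implicit Defensive.

Ltac plia := repeat match goal with
  | H : context [predn ?n] |- _ => rewrite -(subn1 n) in H
  | |- context [predn ?n] => rewrite -(subn1 n) end; lia.
Lemma mup_fact (R : realType) (p : {poly R}) x : p != 0 ->
  exists2 q, p = q * ('X - x%:P)^+(mup x p) & ~~ root q x.
Proof.
move=> p0; have := mup_geq x (mup x p) p0; rewrite leqnn => /esym dv.
exists (p %/ ('X - x%:P)^+(mup x p)); first by rewrite divpK.
apply/negP => rq; suff: (mup x p < mup x p)%N by rewrite ltnn.
rewrite mup_geq // exprS; set m := mup x p.
move: rq; rewrite -dvdp_XsubCl => /dvdpP [r hr].
by rewrite -(divpK dv) hr -mulrA dvdp_mull.
Qed.

Lemma decomp (R : realType) (rs : seq R) : uniq rs -> forall p : {poly R}, p != 0 ->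
  (forall r, root p r -> r \in rs) ->
  exists Q, p = Q * \prod_(r <- rs) ('X - r%:P)^+(mup r p) /\ forall x, ~~ root Q x.
Proof.
elim: rs => [|r rs IH] /= urs p p0 hr.
  exists p; rewrite big_nil mulr1; split=> // x; apply/negP => /hr.
  by rewrite in_nil.
move/andP: urs => [nr urs'].
have [q hq nq] := @mup_fact _ _ r p0.
have q0 : q != 0 by apply: contraNneq p0 => q0; rewrite hq q0 mul0r.
have hrq : forall x, root q x -> x \in rs.
  move=> x rqx; have : root p x by rewrite hq rootM rqx.
  move/hr; rewrite in_cons => /orP [/eqP xr|//].
  by move: nq; rewrite -xr rqx.
have [Q [hQ nQ]] := IH urs' q q0 hrq.
exists Q; split => //. rewrite big_cons.
have -> : \prod_(r0 <- rs) ('X - r0%:P) ^+ mup r0 p =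
          \prod_(r0 <- rs) ('X - r0%:P) ^+ mup r0 q.
  apply: eq_big_seq => r' hr'; congr (_ ^+ _).
  rewrite {1}hq mupMl //.
  rewrite /root horner_exp !hornerE expf_eq0 subr_eq0 negb_and; apply/orP; right.
  by apply: contraNneq nr => <-.
by rewrite {1}hq {1}hQ; ring.
Qed.

Lemma size_decomp (R : realType) (l : seq R) (m : R -> nat) (Q : {poly R}) : Q != 0 ->
  size (Q * \prod_(r <- l) ('X - r%:P)^+(m r)) = (size Q + \sum_(r <- l) m r)%N.
Proof.
elim: l Q => [|r l IH] Q Q0; first by rewrite !big_nil mulr1 addn0.
rewrite !big_cons mulrA IH; last first.
  by rewrite mulf_neq0 // expf_neq0 // polyXsubC_eq0.
rewrite size_Mmonic // ?monic_exp ?monicXsubC // size_exp_XsubC.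
by rewrite addnS /= addnA.
Qed.

Lemma root_map_prod (R : realType) (l : seq R) (m : R -> nat) (z : R[i]) :
  root (map_poly (real_complex R) (\prod_(r <- l) ('X - r%:P)^+(m r))) z ->
  'Im z = 0.
Proof.
elim: l => [|r l IH]; first by rewrite big_nil rmorph1 => h; move: (root1 z); rewrite h.
rewrite big_cons rmorphM rootM => /orP [|//].
rewrite rmorphXn /= map_polyXsubC /root horner_exp !hornerE expf_eq0.
case/andP => _; rewrite subr_eq0 => /eqP ->.
by apply/Creal_ImP/complex_realP; exists r.
Qed.

Lemma rr1 (R : realType) (l : seq R) (m : R -> nat) (Q : {poly R}) :
  Q != 0 -> (size Q <= 1)%N -> real_rooted (Q * \prod_(r <- l) ('X - r%:P)^+(m r)).
Proof.
move=> Q0 sQ z; rewrite (_ : (fun x : R => _) = real_complex R) //.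
rewrite rmorphM rootM => /orP [|]; last exact: root_map_prod.
move=> /=; rewrite (size1_polyC sQ) map_polyC /= rootC.
have c0 : Q`_0 != 0 by move: Q0; rewrite {1}(size1_polyC sQ) polyC_eq0.
by rewrite fmorph_eq0 (negbTE c0).
Qed.

Lemma rr2 (R : realType) (l : seq R) (m : R -> nat) (Q : {poly R}) :
  (forall x, ~~ root Q x) ->
  real_rooted (Q * \prod_(r <- l) ('X - r%:P)^+(m r)) -> (size Q <= 1)%N.
Proof.
move=> nQ rr; apply: contraT; rewrite -ltnNge => sQ.
have : size (map_poly (real_complex R) Q) != 1%N.
  by rewrite size_map_poly neq_ltn sQ orbT.
move/closed_rootP => [z rz].
have : 'Im z = 0.
  apply: rr; rewrite (_ : (fun x : R => _) = real_complex R) //.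
  by rewrite rmorphM rootM rz.
move/Creal_ImP/complex_realP => [k hk]; move: rz; rewrite hk.
rewrite /root horner_map /= fmorph_eq0 => /eqP hQk; by move: (nQ k); rewrite /root hQk eqxx.
Qed.
Lemma mup_gt0 (R : realType) (p : {poly R}) x : p != 0 -> root p x -> (0 < mup x p)%N.
Proof. by move=> p0 rx; rewrite -XsubC_dvd // dvdp_XsubCl. Qed.

Lemma mup_simple (R : realType) (f : {poly R}) x : f != 0 -> root f x ->
  ~~ root f^`() x -> mup x f = 1%N.
Proof.
move=> f0 rx nd; apply/eqP; rewrite eqn_leq mup_gt0 // andbT.
apply: contraNT nd; rewrite -ltnNge mup_geq // => /dvdpP [h ->].
rewrite /root derivM deriv_exp derivXsubC !hornerE /=.
by apply/eqP; ring.
Qed.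

Lemma cont_sign (R : realType) (q : {poly R}) x : q.[x] != 0 ->
  exists2 e, 0 < e & forall y, `|y - x| < e -> 0 < q.[x] * q.[y].
Proof.
move=> qx0; have n0 : 0 < `|q.[x]| by rewrite normr_gt0.
have [d d0 hd] := poly_cont x q n0.
exists d => // y /hd; rewrite ltr_distl.
have [hq|hq] := ltrP 0 q.[x].
  by rewrite gtr0_norm // => /andP [h1 h2]; nra.
rewrite ler0_norm // => /andP [h1 h2].
have : q.[x] < 0 by rewrite lt_neqAle qx0.
nra.
Qed.

Lemma infl_odd (R : realType) (f : {poly R}) x : f^`() != 0 -> root f^`() x ->
  (inflection f x <-> ~~ odd (mup x f^`())).
Proof.
move=> g0 rx; have m0 := mup_gt0 g0 rx.
have [q hg hq] := @mup_fact _ _ x g0.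
move: hg m0; set m := mup x f^`() => hg m0.
have [n hn] : exists n, m = n.+1 by exists m.-1; rewrite prednK.
rewrite hn /= negbK; rewrite hn in hg.
set r := q^`() * ('X - x%:P) + q *+ n.+1.
have hf2 : forall y, (f^`(2)).[y] = (y - x)^+n * r.[y].
  move=> y; rewrite (_ : f^`(2) = f^`()^`()) // hg derivM deriv_exp derivXsubC.
  rewrite /r !hornerE /= !hornerMn !hornerE -[(y - x)^+n *+ _]mulr_natr -[q.[y] *+ _]mulr_natr exprS; ring.
have rx0 : r.[x] != 0.
  rewrite /r !hornerE /= !hornerMn subrr mulr0 add0r mulrn_eq0 /=.
  by move: hq; rewrite /root.
have [e e0 he] := cont_sign rx0.
have hlt : forall y, x - e < y < x + e -> 0 < r.[x] * r.[y].
  by move=> y hy; apply: he; rewrite ltr_distl.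
split.
  case=> e' e'0 hinf; apply: contraT => nodd.
  pose d := Num.min e e' / 2.
  have hm1 : Num.min e e' <= e by rewrite ge_min lexx.
  have hm2 : Num.min e e' <= e' by rewrite ge_min lexx orbT.
  have hm0 : 0 < Num.min e e' by rewrite lt_min e0 e'0.
  have d0 : 0 < d by rewrite /d divr_gt0.
  have hd : d < Num.min e e' by rewrite /d ltr_pdivrMr //; lra.
  have h1 := hlt (x - d); have h2 := hlt (x + d).
  have h1' : 0 < r.[x] * r.[x - d] by apply: h1; apply/andP; split; lra.
  have h2' : 0 < r.[x] * r.[x + d] by apply: h2; apply/andP; split; lra.
  have pos : 0 < (f^`(2)).[x - d] * (f^`(2)).[x + d].
    rewrite !hf2 (_ : x - d - x = - d); last by ring.
    rewrite (_ : x + d - x = d); last by ring.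
    rewrite exprNn -signr_odd (negbTE nodd) expr0 mul1r.
    have dn : 0 < d ^+ n by rewrite exprn_gt0.
    have hb : 0 < r.[x - d] * r.[x + d].
      have := mulr_gt0 h1' h2'; rewrite mulrACA -expr2 pmulr_rgt0 //.
      by rewrite exprn_even_gt0 // rx0 orbT.
    by rewrite mulrACA; apply: mulr_gt0 => //; apply: mulr_gt0.
  have hy1 : x - e' < x - d < x by apply/andP; split; lra.
  have hy2 : x < x + d < x + e' by apply/andP; split; lra.
  case: hinf => [[hl hr]|[hl hr]].
    by have := hl _ hy1; have := hr _ hy2; nra.
  by have := hl _ hy1; have := hr _ hy2; nra.
move=> nodd; exists e => //.
have [rpos|rneg] := ltrP 0 r.[x].
  left; split=> y /andP [h1 h2]; rewrite hf2.
    have := hlt y; rewrite h1 /= => /(_ ltac:(lra)) ry.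
    have : (y - x) ^+ n < 0 by rewrite exprn_odd_lt0 // subr_lt0.
    nra.
  have := hlt y; rewrite h2 andbT => /(_ ltac:(lra)) ry.
  have : 0 < (y - x) ^+ n by rewrite exprn_odd_gt0 // subr_gt0.
  nra.
have rneg' : r.[x] < 0 by rewrite lt_neqAle rx0.
right; split=> y /andP [h1 h2]; rewrite hf2.
  have := hlt y; rewrite h1 /= => /(_ ltac:(lra)) ry.
  have : (y - x) ^+ n < 0 by rewrite exprn_odd_lt0 // subr_lt0.
  nra.
have := hlt y; rewrite h2 andbT => /(_ ltac:(lra)) ry.
have : 0 < (y - x) ^+ n by rewrite exprn_odd_gt0 // subr_gt0.
nra.
Qed.

Lemma prod_neg (R : realType) (l : seq R) y : (forall r, r \in l -> y < r) ->
  0 < (-1) ^+ (size l) * \prod_(r <- l) (y - r).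
Proof.
elim: l => [|r l IH] hl; first by rewrite big_nil expr0 mulr1 ltr01.
rewrite big_cons /= exprS.
have h1 : y < r by apply: hl; rewrite in_cons eqxx.
have h2 : 0 < (-1) ^+ size l * \prod_(j <- l) (y - j).
  by apply: IH => r' hr'; apply: hl; rewrite in_cons hr' orbT.
rewrite (_ : -1 * (-1) ^+ size l * ((y - r) * \prod_(j <- l) (y - j)) =
             (r - y) * ((-1) ^+ size l * \prod_(j <- l) (y - j))); last by ring.
by apply: mulr_gt0 => //; rewrite subr_gt0.
Qed.

Lemma prod_pos (R : realType) (l : seq R) y : (forall r, r \in l -> r < y) ->
  0 < \prod_(r <- l) (y - r).
Proof.
move=> hl; rewrite big_seq; apply: prodr_gt0 => r /hl; by rewrite subr_gt0.
Qed.

Lemma odd_sum_count (T : Type) (l : seq T) (m : T -> nat) :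
  odd (\sum_(r <- l) m r) = odd (count (fun r => odd (m r)) l).
Proof.
elim: l => [|r l IH]; first by rewrite big_nil.
by rewrite big_cons /= !oddD IH oddb.
Qed.

Definition cseg (R : realType) (s : seq R) (i : nat) (x : R) : bool :=
  ((size s < i)%N || (s`_i.-1 <= x)) && ((i <= 1)%N || (x <= s`_i.-2)).

Lemma seg_cseg (R : realType) (s : seq R) i x : seg s i x -> cseg s i x.
Proof.
rewrite /seg /cseg => /andP [h1 h2]; apply/andP; split.
  by case/orP: h1 => [->//|h]; rewrite (ltW h) orbT.
by case/orP: h2 => [->//|h]; rewrite (ltW h) orbT.
Qed.

Lemma cseg_seg (R : realType) (s : seq R) i x y c : cseg s i x -> cseg s i y ->
  x < c -> c < y -> seg s i c.
Proof.
rewrite /seg /cseg => /andP [h1 h2] /andP [h3 h4] xc cy; apply/andP; split.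
  by case/orP: h1 => [->//|h]; rewrite (le_lt_trans h xc) orbT.
by case/orP: h4 => [->//|h]; rewrite (lt_le_trans cy h) orbT.
Qed.

Lemma cseg_mid (R : realType) (s : seq R) i x y c : cseg s i x -> cseg s i y ->
  x <= c -> c <= y -> cseg s i c.
Proof.
rewrite /cseg => /andP [h1 h2] /andP [h3 h4] xc cy; apply/andP; split.
  by case/orP: h1 => [->//|h]; rewrite (le_trans h xc) orbT.
by case/orP: h4 => [->//|h]; rewrite (le_trans cy h) orbT.
Qed.

Lemma sorted_lt (R : realType) (s : seq R) : sorted (fun a b => b < a) s ->
  forall j1 j2, (j1 < j2)%N -> (j2 < size s)%N -> s`_j2 < s`_j1.
Proof.
move=> hs j1 j2 h12 h2.
have tr : transitive (fun a b : R => b < a) by move=> a b c h h'; exact: lt_trans h' h.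
apply: (sorted_ltn_nth tr 0 hs) => //; rewrite inE //.
by apply: ltn_trans h2.
Qed.

Lemma sorted_le (R : realType) (s : seq R) : sorted (fun a b => b < a) s ->
  forall j1 j2, (j1 <= j2)%N -> (j2 < size s)%N -> s`_j2 <= s`_j1.
Proof.
move=> hs j1 j2; rewrite leq_eqVlt => /orP [/eqP -> //|h] h2.
exact/ltW/(sorted_lt hs).
Qed.

Lemma seg_take_drop (R : realType) (s : seq R) i y :
  sorted (fun a b => b < a) s -> (1 <= i <= (size s).+1)%N -> seg s i y ->
  (forall r, r \in take i.-1 s -> y < r) /\ (forall r, r \in drop i.-1 s -> r < y).
Proof.
move=> hs /andP [i1 i2] /andP [h1 h2].
have hi3 : (i.-1 <= size s)%N by plia.
split => r.
  move/(nthP 0) => [j]; rewrite size_takel //.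
  move=> hj <-; rewrite nth_take //.
  case/orP: h2 => [h|h]; first by plia.
  apply: (lt_le_trans h); apply: sorted_le => //; plia.
move/(nthP 0) => [j]; rewrite size_drop => hj <-; rewrite nth_drop.
case/orP: h1 => [h|h]; first by exfalso; set n := size s in hj h i2 hi3; plia.
apply: le_lt_trans h; apply: sorted_le => //; set n := size s in hj hi3 i2 *; plia.
Qed.

Lemma seg_notin (R : realType) (s : seq R) i y :
  sorted (fun a b => b < a) s -> (1 <= i <= (size s).+1)%N -> seg s i y -> y \notin s.
Proof.
move=> hs hi hy; have [ht hd] := seg_take_drop hs hi hy.
rewrite -(cat_take_drop i.-1 s) mem_cat negb_or; apply/andP; split.
  by apply/negP => /ht; rewrite ltxx.
by apply/negP => /hd; rewrite ltxx.
Qed.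

Lemma seg_prod (R : realType) (s : seq R) i y :
  sorted (fun a b => b < a) s -> (1 <= i <= (size s).+1)%N -> seg s i y ->
  0 < (-1) ^+ i.-1 * \prod_(r <- s) (y - r).
Proof.
move=> hs hi hy; have [ht hd] := seg_take_drop hs hi hy.
rewrite -(cat_take_drop i.-1 s) big_cat /=.
have := prod_neg ht; rewrite size_takel; last by plia.
move=> h1; have h2 := prod_pos hd.
by rewrite mulrA; apply: mulr_gt0.
Qed.

Lemma sgr_eq_mul (R : realType) (a b : R) : 0 < a * b -> Num.sg a = Num.sg b.
Proof.
move=> h; have [ha|ha|ha] := ltrgtP a 0.
- have hb : b < 0 by nra.
  by rewrite !ltr0_sg.
- have hb : 0 < b by nra.
  by rewrite !gtr0_sg.
- by move: h; rewrite ha mul0r ltxx.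
Qed.

Lemma sum_int (T : Type) (l : seq T) (a b : T -> nat) :
  \sum_(r <- l) ((a r)%:Z - (b r)%:Z) = (\sum_(r <- l) a r)%:Z - (\sum_(r <- l) b r)%:Z.
Proof.
elim: l => [|r l IH]; first by rewrite !big_nil.
by rewrite !big_cons IH !PoszD; ring.
Qed.

Lemma sign_pred (R : realType) (i : nat) : (0 < i)%N ->
  (-1) ^+ i.-1 = (if odd i then 1 else -1) :> R.
Proof.
by case: i => // i _ /=; rewrite -signr_odd; case: (odd i); rewrite /= ?expr0 ?expr1.
Qed.

Unset Implicit Arguments.

Theorem lemmaA2 (R : realType) (f : {poly R}) (K : nat)
  (hK : (1 < K)%N) (hdeg : size f = K.+1) (hlc : 0 < lead_coef f)
  (hreal : real_rooted f^`())
  (s : seq R) (hsort : sorted (fun a b => b < a) s)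
  (hs : forall x, x \in s <-> (root f^`() x /\ ~ inflection f x)) :
  let k := size s in
  (* (I) *)
  (forall i, (1 <= i <= k)%N ->
     (odd i -> local_min f s`_i.-1) /\ (~~ odd i -> local_max f s`_i.-1)) /\
  (* (II) *)
  (odd k = ~~ odd K) /\
  (* (III) *)
  (forall i, (1 <= i <= k.+1)%N -> monotone_on f (seg s i)) /\
  (* (IV) *)
  (forall i, (1 <= i <= k.+1)%N ->
     (0 <= fval f s i * fval f s i.-1 -> forall x, seg s i x -> ~~ root f x) /\
     (fval f s i * fval f s i.-1 < 0 ->
        exists x, [/\ seg s i x, root f x,
                      (forall y, seg s i y -> root f y -> y = x) &
                      (mup x f = 1%N \/ inflection f x)])) /\
  (* (V) *)
  ((forall b, root f^`() b -> (1 < mup b f^`())%N -> root f b) ->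
     forall i, (1 <= i <= k.+1)%N -> 0 <= fval f s i * fval f s i.-1 ->
       forall x, seg s i x -> ~~ root f^`() x) /\
  (* (VI): S(-oo,+oo) computed over any duplicate-free list rs of reals
     containing every real root of f and of f'. *)
  (forall rs : seq R, uniq rs ->
     (forall r, root f r || root f^`() r -> r \in rs) ->
     (real_rooted f <->
        \sum_(r <- rs) ((mup r f)%:Z - (mup r f^`())%:Z) = 1)).
Proof.
move=> k.
have f0 : f != 0 by rewrite -size_poly_eq0 hdeg.
have sg : size f^`() = K by rewrite polyorder.size_deriv hdeg.
have K0 : (0 < K)%N by apply: ltn_trans hK.
have g0 : f^`() != 0 by rewrite -size_poly_eq0 sg -lt0n.
have lcg : 0 < lead_coef f^`().
  rewrite lead_coefE sg coef_deriv prednK //.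
  move: hlc; rewrite lead_coefE hdeg /= => hlc.
  by rewrite pmulrn_lgt0.
pose rg := rootsR f^`().
have hrg : forall x, (x \in rg) = root f^`() x.
  by move=> x; rewrite -(roots_on_rootsR g0 x) in_itv.
have urg : uniq rg by apply: uniq_roots.
have [Qg [hQg nQg]] : exists Q, f^`() = Q * \prod_(r <- rg) ('X - r%:P)^+(mup r f^`()) /\ forall x, ~~ root Q x.
  by apply: decomp => // r; rewrite hrg.
have Qg0 : Qg != 0 by apply: contraNneq g0 => q0; rewrite hQg q0 mul0r.
have sQg : size Qg = 1%N.
  apply/eqP; rewrite eqn_leq size_poly_gt0 Qg0 andbT.
  by have := hreal; rewrite {1}hQg => h; exact: (rr2 nQg h).
have sum_rg : (\sum_(r <- rg) mup r f^`() = K.-1)%N.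
  have := size_decomp rg (fun r => mup r f^`()) Qg0; rewrite -hQg sg sQg.
  by move=> ->.
have hc : Qg = (lead_coef f^`())%:P.
  rewrite {1}hQg lead_coefM.
  have -> : lead_coef (\prod_(r <- rg) ('X - r%:P) ^+ mup r f^`()) = 1.
    apply/eqP; rewrite -monicE; apply: monic_prod => r _.
    by apply: monic_exp; apply: monicXsubC.
  rewrite mulr1 lead_coefE sQg /=; apply: size1_polyC; by rewrite sQg.
have hmem : forall x, (x \in s) = root f^`() x && odd (mup x f^`()).
  move=> x; apply/idP/idP.
    move/hs => [rx ninf]; rewrite rx /=.
    case od: (odd (mup x f^`())) => //; exfalso; apply: ninf.
    by apply/(infl_odd g0 rx); rewrite od.
  case/andP => rx od; apply/hs; split => // inf.
  by move: (proj1 (infl_odd g0 rx) inf); rewrite od.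
have tr : transitive (fun a b : R => b < a) by move=> a b c h h'; exact: lt_trans h' h.
have us : uniq s by apply: (sorted_uniq tr _ hsort) => a; rewrite ltxx.
have hperm : perm_eq s [seq r <- rg | r \in s].
  apply: uniq_perm => //; first by rewrite filter_uniq.
  move=> x; rewrite mem_filter; case hx: (x \in s) => //=.
  by rewrite hrg; move: hx; rewrite hmem => /andP [].
have keyP : forall y, 0 <= f^`().[y] * \prod_(r <- s) (y - r).
  move=> y; rewrite (perm_big _ hperm) big_filter big_mkcond /=.
  rewrite {1}hQg hornerM hc hornerC horner_prod -mulrA -big_split /=.
  apply: mulr_ge0; first exact: ltW.
  rewrite big_seq; apply: prodr_ge0 => r; rewrite hrg => rr.
  rewrite horner_exp hornerXsubC.
  case: ifP => hr.
    rewrite -exprSr; apply: exprn_even_ge0 => /=.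
    by move: hr; rewrite hmem rr /= => ->.
  rewrite mulr1; apply: exprn_even_ge0.
  by move: hr; rewrite hmem rr /= => ->.
have SG : forall i y, (1 <= i <= k.+1)%N -> seg s i y ->
    0 <= (-1) ^+ i.-1 * f^`().[y].
  move=> i y hi hy; have hp := seg_prod hsort hi hy.
  have := mulr_ge0 (keyP y) (ltW hp).
  set P := \prod_(r <- s) (y - r); set e := (-1) ^+ i.-1.
  rewrite (_ : f^`().[y] * P * (e * P) = (e * f^`().[y]) * (P * P)); last by ring.
  rewrite pmulr_lge0 // -expr2 exprn_even_gt0 //=.
  by apply/negP => /eqP P0; move: hp; rewrite -/P P0 mulr0 ltxx.
have Mono : forall i x y, (1 <= i <= k.+1)%N -> cseg s i x -> cseg s i y -> x <= y ->
    0 <= (-1) ^+ i.-1 * (f.[y] - f.[x]).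
  move=> i x y hi hx hy; rewrite le_eqVlt => /orP [/eqP ->|xy].
    by rewrite subrr mulr0.
  have [c hc0 ->] := poly_mvt f xy.
  rewrite mulrA; apply: mulr_ge0; last by rewrite subr_ge0 ltW.
  apply: SG => //; move: hc0; rewrite in_itv /= => /andP [h1 h2].
  exact: cseg_seg hx hy h1 h2.
have sf : (1 < size f)%N by rewrite hdeg.
have MonoS : forall i x y, (1 <= i <= k.+1)%N -> cseg s i x -> cseg s i y -> x < y ->
    0 < (-1) ^+ i.-1 * (f.[y] - f.[x]).
  move=> i x y hi hx hy xy.
  set p := f - (f.[x])%:P.
  have p0 : p != 0.
    have hsp : size p = size f.
      rewrite size_polyDl // size_polyN.
      by apply: leq_ltn_trans sf; rewrite size_polyC leq_b1.
    by rewrite -size_poly_eq0 hsp hdeg.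
  have [c] := @neighpr_wit _ p x y xy p0.
  rewrite /neighpr in_itv /= => /andP [xc cn].
  have cy : c <= y.
    apply: (le_trans (ltW cn)); have := next_root_in p x y.
    by rewrite in_itv /= => /andP [_ h]; apply: (le_trans h); rewrite ge_max lexx (ltW xy).
  have nrc : ~~ root p c by apply: (neighpr_root (b := y) (x := x)); rewrite /neighpr in_itv /= xc cn.
  have hcx := cseg_mid hx hy (ltW xc) cy.
  have h1 := Mono i x c hi hx hcx (ltW xc).
  have h2 := Mono i c y hi hcx hy cy.
  rewrite lt_neqAle; apply/andP; split; last first.
    by rewrite (_ : f.[y] - f.[x] = (f.[y] - f.[c]) + (f.[c] - f.[x])); [rewrite mulrDr addr_ge0|ring].
  apply/negP => /eqP h0.
  have e2 : ((-1) ^+ i.-1) ^+ 2 = 1 :> R by rewrite -exprM mulnC exprM sqrrN expr1n expr1n.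
  have : (-1) ^+ i.-1 * (f.[c] - f.[x]) = 0.
    apply/eqP; rewrite eq_le h1 andbT.
    have -> : (-1) ^+ i.-1 * (f.[c] - f.[x]) = 0 - (-1) ^+ i.-1 * (f.[y] - f.[c]).
      by rewrite h0; ring.
    by rewrite sub0r oppr_le0.
  move/(congr1 (fun t => (-1) ^+ i.-1 * t)); rewrite mulr0 mulrA -expr2 e2 mul1r => /eqP.
  rewrite subr_eq0 => /eqP fcx.
  by move: nrc; rewrite /root /p !hornerE fcx subrr eqxx.
have hcount : k = count (fun r => odd (mup r f^`())) rg.
  rewrite /k (perm_size hperm) size_filter; apply: eq_in_count => r hr.
  by rewrite /= hmem -hrg hr.
have II : odd k = ~~ odd K.
  by rewrite hcount -odd_sum_count sum_rg -{2}(prednK K0) /= negbK.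
have III : forall i, (1 <= i <= k.+1)%N -> monotone_on f (seg s i).
  move=> i hi; have := sign_pred R (proj1 (andP hi)).
  case: ifP => oi he; [left|right] => x y sx sy le;
    have := Mono i x y hi (seg_cseg sx) (seg_cseg sy) le; rewrite he.
    by rewrite mul1r subr_ge0.
  by rewrite mulN1r oppr_ge0 subr_le0.
have Iloc : forall i, (1 <= i <= k)%N -> exists2 e : R, 0 < e &
    forall y, `|y - s`_i.-1| < e -> 0 <= (-1) ^+ i.-1 * (f.[y] - f.[s`_i.-1]).
  move=> i /andP [i1 ik]; set a := s`_i.-1.
  pose dR := if (1 < i)%N then s`_i.-2 - a else 1.
  pose dL := if (i < k)%N then a - s`_i else 1.
  have dR0 : 0 < dR.
    rewrite /dR; case: ifP => h //; rewrite subr_gt0; apply: sorted_lt => //; clear -h ik i1; plia.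
  have dL0 : 0 < dL.
    rewrite /dL; case: ifP => h //; rewrite subr_gt0; apply: sorted_lt => //; clear -h ik i1; plia.
  exists (Num.min dL dR); first by rewrite lt_min dL0 dR0.
  move=> y; rewrite ltr_distl => /andP [h1' h4'].
  have m1 : Num.min dL dR <= dL by rewrite ge_min lexx.
  have m2 : Num.min dL dR <= dR by rewrite ge_min lexx orbT.
  have h1 : a - dL < y by lra.
  have h4 : y < a + dR by lra.
  have hi : (1 <= i <= k.+1)%N by clear -ik i1; plia.
  have [ay|ya] := leP a y.
    apply: Mono => //.
      rewrite /cseg lexx orbT /=; apply/orP; case: (ltnP 1 i) => h; [right|by left].
      by move: dR0; rewrite /dR h subr_gt0 => /ltW.
    rewrite /cseg ay orbT /=; apply/orP; case: (ltnP 1 i) => h; [right|by left].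
    by move: h4; rewrite /dR h; move=> h5; rewrite -(subrK a s`_i.-2); apply: ltW; lra.
  have hi' : (1 <= i.+1 <= k.+1)%N by clear -ik i1; plia.
  have := Mono i.+1 y a hi'.
  have ca : cseg s i.+1 a.
    rewrite /cseg /= lexx orbT andbT; apply/orP; case: (ltnP i k) => h; [right|by left].
    by move: dL0; rewrite /dL h subr_gt0 => /ltW.
  have cy : cseg s i.+1 y.
    rewrite /cseg /= (ltW ya) orbT andbT; apply/orP; case: (ltnP i k) => h; [right|by left].
    by move: h1; rewrite /dL h => h5; apply: ltW; lra.
  move=> /(_ cy ca (ltW ya)) /=.
  rewrite -(prednK i1) exprS /= => h; rewrite (_ : f.[y] - f.[a] = - (f.[a] - f.[y])); last by ring.
  by move: h; rewrite mulN1r mulNr mulrN.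
have hsq : forall n, ((-1) ^+ n) ^+ 2 = 1 :> R.
  by move=> n; rewrite -exprM mulnC exprM sqrrN expr1n expr1n.
have Pinf : forall y, cauchy_bound f <= y -> 0 < f.[y].
  move=> y hy; have := @sgp_pinftyP _ (cauchy_bound f) f (ge_cauchy_bound f0) y.
  rewrite in_itv /= hy => /(_ isT).
  by rewrite /sgp_pinfty (gtr0_sg hlc) => /eqP; rewrite sgr_cp0.
have Minf : forall y, y <= - cauchy_bound f -> 0 < (-1) ^+ K * f.[y].
  move=> y hy; have := @sgp_minftyP _ (- cauchy_bound f) f (le_cauchy_bound f0) y.
  rewrite in_itv /= hy => /(_ isT).
  rewrite /sgp_minfty hdeg /= sgrM (gtr0_sg hlc) mulr1 -signr_odd; case: (odd K) => /=.
    by rewrite expr1 sgrN1 => /eqP; rewrite sgr_cp0 => h; rewrite mulN1r oppr_gt0.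
  by rewrite expr0 sgr1 => /eqP; rewrite sgr_cp0 mul1r.
pose cb := cauchy_bound f.
pose lo i t := if (k < i)%N then Num.min (- cb) t else s`_i.-1.
pose hi i t := if (i <= 1)%N then Num.max cb t else s`_i.-2.
have lo_prop : forall i x, (1 <= i <= k.+1)%N -> seg s i x ->
    [/\ lo i (x - 1) < x, cseg s i (lo i (x - 1)) & Num.sg f.[lo i (x - 1)] = Num.sg (fval f s i)].
  move=> i x hi1 hx; have := hx; move=> /andP [h1 h2].
  have i0 : (i == 0%N) = false by case: i hi1 {h1 h2 hx}.
  rewrite /lo /fval i0; case: ifP => hk.
    have mx : Num.min (- cb) (x - 1) <= x - 1 by rewrite ge_min lexx orbT.
    have mc : Num.min (- cb) (x - 1) <= - cb by rewrite ge_min lexx.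
    split; first by lra.
      rewrite /cseg; apply/andP; split; first by apply/orP; left.
      case/orP: h2 => [->//|h]; apply/orP; right; lra.
    rewrite hdeg /=; apply/esym/sgr_eq_mul; exact: Minf.
  move: h1; rewrite /= -/k hk /= => h1.
  split => //; rewrite /cseg lexx orbT /=.
  case/orP: h2 => [->//|h]; apply/orP; right; exact: ltW (lt_trans h1 h).
have hi_prop : forall i x, (1 <= i <= k.+1)%N -> seg s i x ->
    [/\ x < hi i (x + 1), cseg s i (hi i (x + 1)) & Num.sg f.[hi i (x + 1)] = Num.sg (fval f s i.-1)].
  move=> i x hi1 hx; have := hx; move=> /andP [h1 h2].
  rewrite /hi; case: ifP => hk.
    have mx : x + 1 <= Num.max cb (x + 1) by rewrite le_max lexx orbT.
    have mc : cb <= Num.max cb (x + 1) by rewrite le_max lexx.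
    split; first by lra.
      rewrite /cseg hk andbT; case/orP: h1 => [->//|h]; apply/orP; right; lra.
    have -> : i.-1 = 0%N by case: i hi1 hk {h1 h2 hx} => [|[|]].
    by rewrite /fval /= sgr1; apply: gtr0_sg; apply: Pinf.
  move: h2; rewrite /= hk /= => h2.
  split => //.
    rewrite /cseg lexx orbT andbT.
    case/orP: h1 => [->//|h]; apply/orP; right; exact: ltW (lt_trans h h2).
  rewrite /fval.
  have -> : (i.-1 == 0%N) = false by case: i hi1 hk {h1 h2 hx} => [|[|]].
  have -> : (size s < i.-1)%N = false by move: hi1; clear; move=> hi1; plia.
  by [].
have IV1 : forall i, (1 <= i <= k.+1)%N -> 0 <= fval f s i * fval f s i.-1 ->
    forall x, seg s i x -> ~~ root f x.
  move=> i hi1 hp x hx; apply/negP => rx.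
  have [l1 l2 l3] := lo_prop i x hi1 hx; have [u1 u2 u3] := hi_prop i x hi1 hx.
  have m1 := MonoS i _ _ hi1 l2 (seg_cseg hx) l1.
  have m2 := MonoS i _ _ hi1 (seg_cseg hx) u2 u1.
  rewrite (rootP rx) in m1 m2.
  have hn : f.[lo i (x - 1)] * f.[hi i (x + 1)] < 0.
    have := mulr_gt0 m1 m2.
    rewrite (_ : (-1) ^+ i.-1 * (0 - f.[lo i (x - 1)]) * ((-1) ^+ i.-1 * (f.[hi i (x + 1)] - 0))
       = - (((-1) ^+ i.-1) ^+ 2) * (f.[lo i (x - 1)] * f.[hi i (x + 1)])); last by ring.
    by rewrite hsq mulN1r oppr_gt0.
  have : Num.sg (fval f s i * fval f s i.-1) = -1 by rewrite sgrM -l3 -u3 -sgrM ltr0_sg.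
  by move/eqP; rewrite sgr_cp0 ltNge hp.
have segne : forall i, (1 <= i <= k.+1)%N -> exists x, seg s i x.
  move=> i /andP [i1 i2]; rewrite /seg -/k.
  case: (ltnP k i) => hk; case: (leqP i 1) => h1.
  - by exists 0.
  - by exists (s`_i.-2 - 1) => /=; lra.
  - by exists (s`_i.-1 + 1); rewrite /= andbT; lra.
  - have hlt : s`_i.-1 < s`_i.-2.
      by apply: sorted_lt => //; move: i1 i2 h1 hk; clear; move=> i1 i2 h1 hk; plia.
    by exists ((s`_i.-1 + s`_i.-2) / 2) => /=; apply/andP; split; lra.
have IV2 : forall i, (1 <= i <= k.+1)%N -> fval f s i * fval f s i.-1 < 0 ->
    exists x, [/\ seg s i x, root f x,
                  (forall y, seg s i y -> root f y -> y = x) &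
                  (mup x f = 1%N \/ inflection f x)].
  move=> i hi1 hp; have [x0 hx0] := segne i hi1.
  have [l1 l2 l3] := lo_prop i x0 hi1 hx0; have [u1 u2 u3] := hi_prop i x0 hi1 hx0.
  have hn : f.[lo i (x0 - 1)] * f.[hi i (x0 + 1)] < 0.
    have : Num.sg (f.[lo i (x0 - 1)] * f.[hi i (x0 + 1)]) = -1.
      by rewrite sgrM l3 u3 -sgrM ltr0_sg.
    by move/eqP; rewrite sgr_cp0.
  have [z hz rz] := poly_ivtoo (ltW (lt_trans l1 u1)) hn.
  move: hz; rewrite in_itv /= => /andP [hz1 hz2].
  have sz := cseg_seg l2 u2 hz1 hz2.
  exists z; split => //.
    move=> y sy ry; have [yz|zy|//] := ltrgtP y z.
      have := MonoS i _ _ hi1 (seg_cseg sy) (seg_cseg sz) yz.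
      by rewrite (rootP ry) (rootP rz) subrr mulr0 ltxx.
    have := MonoS i _ _ hi1 (seg_cseg sz) (seg_cseg sy) zy.
    by rewrite (rootP ry) (rootP rz) subrr mulr0 ltxx.
  case rgz: (root f^`() z).
    right; apply/(infl_odd g0 rgz).
    by have := seg_notin hsort hi1 sz; rewrite hmem rgz.
  by left; apply: mup_simple => //; rewrite rgz.
have V : (forall b, root f^`() b -> (1 < mup b f^`())%N -> root f b) ->
     forall i, (1 <= i <= k.+1)%N -> 0 <= fval f s i * fval f s i.-1 ->
       forall x, seg s i x -> ~~ root f^`() x.
  move=> H i hi1 hp x hx; apply/negP => rx.
  have nin := seg_notin hsort hi1 hx; rewrite hmem rx /= in nin.
  have m1 := mup_gt0 g0 rx.
  have m2 : (1 < mup x f^`())%N by move: m1 nin; case: (mup x f^`()) => [|[|n]].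
  by have := IV1 i hi1 hp x hx; rewrite (H x rx m2).
have VI : forall rs : seq R, uniq rs ->
     (forall r, root f r || root f^`() r -> r \in rs) ->
     (real_rooted f <-> \sum_(r <- rs) ((mup r f)%:Z - (mup r f^`())%:Z) = 1).
  move=> rs urs hrs.
  have [Qf [hQf nQf]] : exists Q, f = Q * \prod_(r <- rs) ('X - r%:P)^+(mup r f) /\ forall x, ~~ root Q x.
    by apply: decomp => // r hr; apply: hrs; rewrite hr.
  have [Qh [hQh nQh]] : exists Q, f^`() = Q * \prod_(r <- rs) ('X - r%:P)^+(mup r f^`()) /\ forall x, ~~ root Q x.
    by apply: decomp => // r hr; apply: hrs; rewrite hr orbT.
  have Qf0 : Qf != 0 by apply: contraNneq f0 => q0; rewrite hQf q0 mul0r.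
  have Qh0 : Qh != 0 by apply: contraNneq g0 => q0; rewrite hQh q0 mul0r.
  have sQh : size Qh = 1%N.
    apply/eqP; rewrite eqn_leq size_poly_gt0 Qh0 andbT.
    by have := hreal; rewrite {1}hQh => h; exact: (rr2 nQh h).
  have sumh : (\sum_(r <- rs) mup r f^`() = K.-1)%N.
    have := size_decomp rs (fun r => mup r f^`()) Qh0; rewrite -hQh sg sQh.
    by move=> ->.
  have sumf : (size Qf + \sum_(r <- rs) mup r f = K.+1)%N.
    by have := size_decomp rs (fun r => mup r f) Qf0; rewrite -hQf hdeg.
  have sQf0 : (0 < size Qf)%N by rewrite size_poly_gt0.
  rewrite sum_int sumh; split.
    move=> rr; have sQf : (size Qf <= 1)%N.
      by have := rr; rewrite {1}hQf => h; exact: (rr2 nQf h).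
    have -> : (\sum_(r <- rs) mup r f = K)%N.
      by move: sumf sQf sQf0; clear; move=> sumf sQf sQf0; lia.
    by move: K0; clear; move=> K0; rewrite -subn1; lia.
  move=> heq; have hsum : (\sum_(r <- rs) mup r f = K)%N.
    by move: heq K0; clear; move=> heq K0; rewrite -subn1 in heq; lia.
  have sQf : (size Qf <= 1)%N.
    by move: sumf hsum; clear; move=> sumf hsum; lia.
  by rewrite hQf; apply: rr1.
split.
  move=> i hi1; have [e e0 he] := Iloc i hi1.
  have i0 : (0 < i)%N by case/andP: hi1.
  split => oi; exists e => // y hy; have := he y hy; rewrite sign_pred //.
    by rewrite oi mul1r subr_ge0.
  by rewrite (negbTE oi) mulN1r oppr_ge0 subr_le0.
split; first exact: II.
split; first exact: III.
split; first by move=> i hi1; split; [exact: IV1 | exact: IV2].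
split; first exact: V.
exact: VI.
Qed.
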